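(* Let $L \ge N$, let $\mathbf{T} \in \mathbb{R}^{L\times N}$ have full rank $N$, and let $\gamma>0$. Define the set-valued map $H:\mathbb{R}^N\rightrightarrows\mathbb{R}^N$ by $\mathbf{y}\in H(\mathbf{x})$ if and only if $\mathbf{x} = \mathbf{T}^{\dagger}S_\gamma\mathbf{T}(\mathbf{x}+\mathbf{y})$. Equip $\mathbb{R}^N$ with the scalar product $\langle\mathbf{x},\mathbf{y}\rangle_{\mathbf{T}} := \mathbf{x}^T\mathbf{T}^*\mathbf{T}\mathbf{y}$. Then $H$ is cyclically monotone with respect to $\langle\cdot,\cdot\rangle_{\mathbf{T}}$: for every integer $m\ge 2$, all $\mathbf{x}_1,\dots,\mathbf{x}_m\in\mathbb{R}^N$ and all $\mathbf{y}_i\in H(\mathbf{x}_i)$, $i=1,\dots,m$, $$\langle \mathbf{x}_2-\mathbf{x}_1,\mathbf{y}_1\rangle_{\mathbf{T}} + \langle \mathbf{x}_3-\mathbf{x}_2,\mathbf{y}_2\rangle_{\mathbf{T}} + \cdots + \langle \mathbf{x}_1-\mathbf{x}_m,\mathbf{y}_m\rangle_{\mathbf{T}} \le 0.$$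
   Context: $\mathbf{T}^*$ is the transpose of $\mathbf{T}$, $\mathbf{T}^{\dagger}=(\mathbf{T}^*\mathbf{T})^{-1}\mathbf{T}^*$ its Moore–Penrose inverse. $S_\gamma:\mathbb{R}^L\to\mathbb{R}^L$ is componentwise soft shrinkage: $[S_\gamma(\mathbf{y})]_j = y_j-\gamma$ if $y_j\ge\gamma$, $y_j+\gamma$ if $y_j\le-\gamma$, $0$ if $|y_j|<\gamma$. *)

(* Defs.v *)
From mathcomp Require Import all_boot all_order all_algebra.
From mathcomp Require Import reals.
Set Implicit Arguments. Unset Strict Implicit. Unset Printing Implicit Defensive.
Import Order.TTheory GRing.Theory Num.Theory.
Local Open Scope ring_scope.

(* Vectors of R^n are column vectors 'cV[R]_n; T^* is the transpose T^T. *)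

(* Moore--Penrose inverse of a full-column-rank matrix: (T^T T)^{-1} T^T *)
Definition pinv (R : realType) (L N : nat) (T : 'M[R]_(L, N)) : 'M[R]_(N, L) :=
  invmx (T^T *m T) *m T^T.

Definition soft (R : realType) (g y : R) : R :=
  if g <= y then y - g else if y <= - g then y + g else 0.

Definition Sgamma (R : realType) (L : nat) (g : R) (y : 'cV[R]_L) : 'cV[R]_L :=
  \col_i soft g (y i 0).

Definition Hmap (R : realType) (L N : nat) (T : 'M[R]_(L, N)) (g : R)
  (x y : 'cV[R]_N) : Prop :=
  x = pinv T *m Sgamma g (T *m (x + y)).

Definition ipT (R : realType) (L N : nat) (T : 'M[R]_(L, N)) (x y : 'cV[R]_N) : R :=
  (x^T *m (T^T *m T) *m y) 0 0.

(* Main.v *)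
Require Import Defs.
From mathcomp Require Import all_boot all_order all_algebra.
From mathcomp Require Import reals.
From mathcomp Require Import ring lra.
Import Order.TTheory GRing.Theory Num.Theory.
Local Open Scope ring_scope.
Set Implicit Arguments. Unset Strict Implicit. Unset Printing Implicit Defensive.

Lemma soft_ineq (R : realType) (g z t : R) : 0 < g ->
  (t - soft g z) * (z - soft g z) <= g * `|t| - g * `|soft g z|.
Proof.
move=> hg; rewrite /soft.
have h1 : t <= `|t| := ler_norm t.
have h2 : - t <= `|t| by rewrite -normrN ler_norm.
have h1' : g * t <= g * `|t| by rewrite ler_wpM2l // ltW.
have h2' : g * (- t) <= g * `|t| by rewrite ler_wpM2l // ltW.
case: ifP => hz1.
  have -> : `|z - g| = z - g by rewrite ger0_norm // subr_ge0 hz1.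
  have -> : (t - (z - g)) * (z - (z - g)) = g * t + g * g - g * z by ring.
  lra.
case: ifP => hz2.
  have -> : `|z + g| = - (z + g) by rewrite ler0_norm // -lerBrDr sub0r hz2.
  have -> : (t - (z + g)) * (z - (z + g)) = g * (- t) + g * z + g * g by ring.
  lra.
rewrite normr0 mulr0 subr0 subr0.
have hzn : `|z| <= g.
  rewrite ler_norml; apply/andP; split.
    by apply: ltW; rewrite ltNge hz2.
  by apply: ltW; rewrite ltNge hz1.
have : `|t| * `|z| <= `|t| * g by rewrite ler_wpM2l.
have : t * z <= `|t * z| := ler_norm _.
rewrite normrM; lra.
Qed.

Definition dotL (R : realType) (L : nat) (a b : 'cV[R]_L) : R :=
  \sum_k a k 0 * b k 0.

Lemma orth0 (R : realType) (L N : nat) (T : 'M[R]_(L, N)) (w : 'cV[R]_L) (a : 'cV[R]_N) :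
  T^T *m w = 0 -> \sum_k w k 0 * (T *m a) k 0 = 0.
Proof.
move=> hw.
have : (w^T *m (T *m a)) 0 0 = 0.
  by rewrite mulmxA -[w^T *m T]trmxK trmx_mul trmxK hw trmx0 mul0mx mxE.
move=> h; rewrite -[RHS]h [RHS]mxE; apply: eq_bigr => k _; by rewrite [w^T _ _]mxE.
Qed.

Lemma ipT_dot (R : realType) (L N : nat) (T : 'M[R]_(L, N)) (a b : 'cV[R]_N) :
  ipT T a b = \sum_k (T *m a) k 0 * (T *m b) k 0.
Proof.
rewrite /ipT mulmxA -[a^T *m T^T]trmxK trmx_mul trmxK -mulmxA mxE.
by rewrite trmxK; apply: eq_bigr => k _; rewrite mxE.
Qed.

Definition Phi (R : realType) (L N : nat) (T : 'M[R]_(L, N)) (g : R) (x y : 'cV[R]_N) : R :=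
  \sum_k (g * `|Sgamma g (T *m (x + y)) k 0| +
          (Sgamma g (T *m (x + y)) k 0 - (T *m x) k 0) ^+ 2 / 2).

Lemma step (R : realType) (L N : nat) (T : 'M[R]_(L, N)) (g : R) (x y x' y' : 'cV[R]_N) :
  0 < g ->
  T^T *m (T *m x) = T^T *m Sgamma g (T *m (x + y)) ->
  T^T *m (T *m x') = T^T *m Sgamma g (T *m (x' + y')) ->
  ipT T (x' - x) y <= Phi T g x' y' - Phi T g x y.
Proof.
move=> hg hx hx'.
set u := T *m x; set u' := T *m x'; set v := T *m y.
set s := Sgamma g (T *m (x + y)); set s' := Sgamma g (T *m (x' + y')).
have hz : T *m (x + y) = u + v by rewrite mulmxDr.
have A : \sum_k (u - s) k 0 * v k 0 = 0.
  by apply: orth0; rewrite mulmxBr hx subrr.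
have B : \sum_k (u' - s') k 0 * v k 0 = 0.
  by apply: orth0; rewrite mulmxBr hx' subrr.
have C : \sum_k (s - u) k 0 * u' k 0 = 0.
  by apply: orth0; rewrite mulmxBr hx subrr.
have D : \sum_k (s - u) k 0 * u k 0 = 0.
  by apply: orth0; rewrite mulmxBr hx subrr.
rewrite ipT_dot mulmxBr /Phi -sumrB.
pose Q0 k := (s' k 0 - s k 0) * ((u + v) k 0 - s k 0) + (s' k 0 - u' k 0) * (s k 0 - u k 0)
            - (s k 0 - u k 0) ^+ 2.
have [Q hQ] : exists Q : 'I_L -> R, forall k, Q k = Q0 k by exists Q0.
have E : \sum_k (u' - u) k 0 * v k 0 =
  \sum_k (Q k - (u - s) k 0 * v k 0 + (u' - s') k 0 * v k 0
          + (s - u) k 0 * u' k 0 - (s - u) k 0 * u k 0).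
  apply: eq_bigr => k _; rewrite hQ /Q0 !mxE; ring.
rewrite E !big_split /= !sumrN A B C D oppr0 !addr0.
rewrite -big_split -sumrB.
apply: ler_sum => k _; rewrite hQ /Q0.
have hs : s k 0 = soft g ((u + v) k 0) by rewrite /s /Sgamma mxE hz.
have := soft_ineq ((u + v) k 0) (s' k 0) hg.
rewrite -hs.
have : 0 <= (s' k 0 - u' k 0 - (s k 0 - u k 0)) ^+ 2 := sqr_ge0 _.
rewrite /= -/s -/s' -/u -/u'; lra.
Qed.
Lemma G_unit (R : realType) (L N : nat) (T : 'M[R]_(L, N)) :
  \rank T = N -> T^T *m T \in unitmx.
Proof.
move=> hr; rewrite -row_free_unit -kermx_eq0.
set K := kermx (T^T *m T).
have hK : K *m (T^T *m T) = 0 by apply: mulmx_ker.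
have hTf : row_free T^T by rewrite /row_free mxrank_tr hr.
rewrite -(mulmx_free_eq0 K hTf).
set A := K *m T^T.
have hA : A *m A^T = 0 by rewrite /A trmx_mul trmxK mulmxA -(mulmxA K) hK mul0mx.
apply/eqP/matrixP => i j; rewrite [RHS]mxE.
have h0 : \sum_k A i k * A i k = 0.
  move/matrixP: hA => /(_ i i); rewrite !mxE => h; rewrite -[RHS]h; apply: eq_bigr => k _; by rewrite [A^T _ _]mxE.
have : forall k, true -> A i k * A i k = 0.
  apply/psumr_eq0P => // k _; exact: mulr_ge0_le0 || by rewrite -expr2 sqr_ge0.
by move=> /(_ j isT) /eqP; rewrite mulf_eq0 orbb => /eqP.
Qed.

Theorem theorem3p4 (R : realType) (L N : nat) (T : 'M[R]_(L, N)) (g : R)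
  (hLN : (N <= L)%N) (hrank : \rank T = N) (hg : 0 < g)
  (m : nat) (hm : (2 <= m)%N)
  (x y : 'I_m -> 'cV[R]_N) :
  (forall i, Hmap T g (x i) (y i)) ->
  \sum_(i < m) ipT T (x (ordS i) - x i) (y i) <= 0.
Proof.
move=> hH.
have hU := G_unit hrank.
have hx : forall i, T^T *m (T *m x i) = T^T *m Sgamma g (T *m (x i + y i)).
  by move=> i; rewrite {1}(hH i) /pinv !mulmxA mulmxV // mul1mx.
apply: (le_trans (ler_sum _ (fun i _ => step hg (hx i) (hx (ordS i))))).
by rewrite sumrB [X in _ - X](reindex_inj (@ordS_inj _)) subrr.
Qed.
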